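(* Let $X$ be a finite non-empty set and for every $a\in X$ let $\sigma_a,\tau_a:X\to X$ be maps with each $\sigma_a$ bijective (so that the special set-theoretic Yang–Baxter algebra ${\cal A}$ of these data is defined). Suppose $(X,+,0)$ is a group (not necessarily abelian) and $\sigma_{\sigma_a(b)}(\tau_b(a))=a$ for all $a,b\in X$. Define $a\circ b:=a+\sigma_a(b)$ for $a,b\in X$. \begin{enumerate} \item Then for all $a,b\in X$, $\sigma_a(b)\circ\tau_b(a)=-a+a\circ b+a$. \item If in addition $(X,\circ)$ is a semigroup and $\sigma_a(b+c)=\sigma_a(b)+\sigma_a(c)$ for all $a,b,c\in X$, then for all $a,b,c\in X$: (a) $\sigma_a(\sigma_b(c))=\sigma_{a\circ b}(c)$; (b) $(X,\circ,0)$ is a group; (c) $a\circ(b+c)=a\circ b-a+a\circ c$; (d) $\sigma_a(0)=0$, $\tau_0(a)=a$, $\sigma_0(a)=a$ and $\tau_a(0)=0$. \end{enumerate}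
   Context: The special set-theoretic Yang–Baxter algebra ${\cal A}$ is the unital associative algebra generated by $1_{\cal A},h_a,w_a,w_a^{-1}$ ($a\in X$) with relations $h_ah_b=\delta_{a,b}h_a$, $w_a^{-1}w_a=w_aw_a^{-1}=1_{\cal A}$, $w_aw_b=w_{\sigma_a(b)}w_{\tau_b(a)}$, $w_ah_b=h_{\sigma_a(b)}w_a$, where each $\sigma_a$ is a bijection; only the bijectivity of the $\sigma_a$ enters the statement. *)

(* Defs.v *)
From mathcomp Require Import all_boot.

Set Implicit Arguments.
Unset Strict Implicit.
Unset Printing Implicit Defensive.

Definition is_group (T : Type) (op : T -> T -> T) (e : T) (inv : T -> T) : Prop :=
  [/\ (forall a b c, op a (op b c) = op (op a b) c),
      (forall a, op e a = a /\ op a e = a)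
    & (forall a, op (inv a) a = e /\ op a (inv a) = e)].

Definition is_group_with_unit (T : Type) (op : T -> T -> T) (e : T) : Prop :=
  [/\ (forall a b c, op a (op b c) = op (op a b) c),
      (forall a, op e a = a /\ op a e = a)
    & (forall a, exists b, op a b = e /\ op b a = e)].

Definition circ (T : Type) (add : T -> T -> T) (sigma : T -> T -> T) (a b : T) : T :=
  add a (sigma a b).

(* Main.v *)
Require Import Defs.
From mathcomp Require Import all_boot.

Theorem theorem2p13
  (X : finType) (sigma tau : X -> X -> X)
  (add : X -> X -> X) (zero : X) (opp : X -> X) :
  (forall a : X, bijective (sigma a)) ->
  is_group add zero opp ->
  (forall a b : X, sigma (sigma a b) (tau b a) = a) ->
  (forall a b : X,
      circ add sigma (sigma a b) (tau b a)
      = add (add (opp a) (circ add sigma a b)) a)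
  /\
  ((forall a b c : X,
      circ add sigma a (circ add sigma b c) = circ add sigma (circ add sigma a b) c) ->
   (forall a b c : X, sigma a (add b c) = add (sigma a b) (sigma a c)) ->
   [/\ (forall a b c : X, sigma a (sigma b c) = sigma (circ add sigma a b) c),
       is_group_with_unit (circ add sigma) zero,
       (forall a b c : X,
          circ add sigma a (add b c)
          = add (add (circ add sigma a b) (opp a)) (circ add sigma a c))
     & (forall a : X,
          [/\ sigma a zero = zero, tau zero a = a,
              sigma zero a = a & tau a zero = zero])]).
Proof.
move=> bij [A I V] H.
have add0 x : add zero x = x by case: (I x).
have addr0 x : add x zero = x by case: (I x).
have addNx x : add (opp x) x = zero by case: (V x).
have addxN x : add x (opp x) = zero by case: (V x).
have canl x y z : add x y = add x z -> y = z.
  move=> E; have : add (opp x) (add x y) = add (opp x) (add x z) by rewrite E.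
  by rewrite !A addNx !add0.
have inj a : injective (sigma a) by apply: bij_inj.
split.
  move=> a b; rewrite /circ H.
  by rewrite (A (opp a)) addNx add0.
move=> C D.
have s0 a : sigma a zero = zero.
  apply: (canl (sigma a zero)); by rewrite addr0 -D addr0.
have c0 a : circ add sigma a zero = a by rewrite /circ s0 addr0.
have sid a : sigma zero a = a.
  have E := C zero zero a; rewrite c0 /circ !add0 in E.
  exact: (inj zero).
have c0l a : circ add sigma zero a = a by rewrite /circ add0 sid.
have SA a b c : sigma a (sigma b c) = sigma (circ add sigma a b) c.
  have E := C a b c; rewrite /circ D in E.
  rewrite /circ -!A in E; rewrite /circ; apply: (canl (sigma a b)); exact: (canl a).
have rinv a : exists b, circ add sigma a b = zero.
  case: (bij a) => g _ gK.
  exists (g (opp a)); by rewrite /circ gK addxN.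
split; first exact: SA.
- split; [exact: C | by move=> a; split; [exact: c0l | exact: c0] | move=> a].
  case: (rinv a) => b Eb; exists b; split => //.
  case: (rinv b) => c Ec.
  suff -> : a = c by [].
  by rewrite -(c0 a) -Ec C Eb c0l.
- move=> a b c; rewrite /circ D -!A; congr (add a _).
  by rewrite (A (opp a)) addNx add0.
- move=> a; split => //.
  + by have := H a zero; rewrite s0 sid.
  + apply: (inj a); rewrite s0.
    by have := H zero a; rewrite sid.
Qed.
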